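(* Let $d^0, d^{L+1} \in \mathbb{N}$ and let $\mathcal{F} = (\mathbb{R}^{d^{L+1}})^{\mathbb{R}^{d^0}}$ be the space of all functions $f \colon \mathbb{R}^{d^0} \to \mathbb{R}^{d^{L+1}}$, equipped with the product topology and the usual Borel product $\sigma$-algebra. Let $(P_{f_n})_{n \geq 1}$ be a sequence of probability distributions on $\mathcal{F}$ (the function-space priors of a sequence of Bayesian neural networks) and let $P_f$ be a probability distribution on $\mathcal{F}$ such that $P_{f_n} \Rightarrow P_f$ (weak convergence). Let $D = \{(x_i, y_i)\}_{i=1}^m$ be a fixed finite dataset with inputs $\mathcal{X} = \{x_i\}_{i=1}^m \subset \mathbb{R}^{d^0}$, and for $f \in \mathcal{F}$ write $f(\mathcal{X}) = [f(x)]_{x \in \mathcal{X}} \in \mathbb{R}^{|D| d^{L+1}}$. Let $\ell \colon \mathbb{R}^{|D| d^{L+1}} \to [0,\infty)$ be a continuous bounded likelihood function satisfying the likelihood assumption described in the context, and assume $\int \ell(f(\mathcal{X}))\, dP_f(f) > 0$. Let $P_{f_n \mid D}$ and $P_{f \mid D}$ denote the Bayesian posteriors induced by the likelihood $\ell$ and the priors $P_{f_n}$ and $P_f$ respectively, i.e. the probability measures on $\mathcal{F}$ with $$\frac{dP_{f_n\mid D}}{dP_{f_n}}(f) = \frac{\ell(f(\mathcal{X}))}{\int \ell(g(\mathcal{X}))\,dP_{f_n}(g)}, \qquad \frac{dP_{f\mid D}}{dP_{f}}(f) = \frac{\ell(f(\mathcal{X}))}{\int \ell(g(\mathcal{X}))\,dP_{f}(g)}.$$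 Then $P_{f_n \mid D} \Rightarrow P_{f \mid D}$.
   Context: Weak convergence $P_n \Rightarrow P$ means $\int h\, dP_n \to \int h \, dP$ for every real-valued continuous bounded $h$. Likelihood assumption: the targets $\mathcal{Y} = \{y_i\}_{i=1}^m$ depend on the network parameters $\theta_n$ and the inputs $\mathcal{X}$ only through the network outputs $f_n(\mathcal{X}) = [f_n(x)]_{x\in\mathcal{X}} \in \mathbb{R}^{|D| d^{L+1}}$; there exists a measure $\nu$ such that the conditional distribution $P_{\mathcal{Y} \mid f_n(\mathcal{X})}$ is absolutely continuous with respect to $\nu$ for every value of $f_n(\mathcal{X})$; and the likelihood $\ell_n(f_n(\mathcal{X})) := \frac{dP_{\mathcal{Y} \mid f_n(\mathcal{X})}}{d\nu}(\mathcal{Y})$, viewed as a function of $f_n(\mathcal{X})$, satisfies $\ell_n = \ell$ for all $n$, with $\ell \colon \mathbb{R}^{|D| d^{L+1}} \to [0,\infty)$ continuous and bounded. (Examples: Gaussian likelihood $\ell \propto \exp\{-\frac{1}{2\sigma^2}\sum_i \|y_i - f_n(x_i)\|^2\}$, or categorical likelihood with softmax.) *)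

(* Defs.v *)
From HB Require Import structures.
From mathcomp Require Import all_boot all_order all_algebra.
From mathcomp Require Import all_classical all_reals all_analysis.
Set Implicit Arguments. Unset Strict Implicit. Unset Printing Implicit Defensive.
Import Order.TTheory GRing.Theory Num.Theory.
Import numFieldNormedType.Exports.
Local Open Scope classical_set_scope.
Local Open Scope ring_scope.

Notation fspace R d0 d1 := ({ptws 'rV[R]_d0 -> 'rV[R]_d1}).

Definition eval_gen (R : realType) (d0 d1 : nat) : set (set (fspace R d0 d1)) :=
  [set A | exists (x : 'rV[R]_d0) (j : 'I_d1) (B : set R),
      measurable B /\ A = (fun f : fspace R d0 d1 => f x ord0 j) @^-1` B].

Definition fmeas (R : realType) (d0 d1 : nat) :=
  g_sigma_algebraType (@eval_gen R d0 d1).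

(* f(X) = [f(x_i)]_i, arranged as an m x d1 matrix (= a point of R^{m d1}). *)
Definition evalX (R : realType) (d0 d1 m : nat) (X : 'I_m -> 'rV[R]_d0)
  (f : fspace R d0 d1) : 'M[R]_(m, d1) := \matrix_(i, j) f (X i) ord0 j.

Definition weak_conv (R : realType) (d0 d1 : nat)
  (Pn : nat -> probability (fmeas R d0 d1) R) (P : probability (fmeas R d0 d1) R) :=
  forall h : fspace R d0 d1 -> R,
    continuous h ->
    (exists M : R, forall f, `|h f| <= M) ->
    measurable_fun [set: fmeas R d0 d1] (h : fmeas R d0 d1 -> R) ->
    (\int[Pn n]_f (h f)%:E)%E @[n --> \oo] --> (\int[P]_f (h f)%:E)%E.

Definition is_posterior (R : realType) (d0 d1 m : nat) (X : 'I_m -> 'rV[R]_d0)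
  (l : 'M[R]_(m, d1) -> R) (P Q : probability (fmeas R d0 d1) R) :=
  forall A : set (fmeas R d0 d1), measurable A ->
    Q A = (\int[P]_(f in A)
             (l (evalX X f) / fine (\int[P]_g (l (evalX X g))%:E)%E)%:E)%E.

(* Main.v *)
Require Import Defs.
From HB Require Import structures.
From mathcomp Require Import all_boot all_order all_algebra.
From mathcomp Require Import all_classical all_reals all_analysis.
From mathcomp Require Import measurable_realfun.
Import Order.TTheory GRing.Theory Num.Theory.
Import numFieldNormedType.Exports.
Local Open Scope classical_set_scope.
Local Open Scope ring_scope.
Section G.
Context d (T : measurableType d) (R : realType).

Lemma meas_exists (I : countType) (S : I -> set T) :
  (forall i, measurable (S i)) -> measurable [set t | exists i, S i t].
Proof.
move=> mS.
have -> : [set t | exists i, S i t] =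
    \bigcup_n (match @unpickle I n with Some i => S i | None => set0 end).
  apply/seteqP; split => t /=.
  - by move=> [i Si]; exists (pickle i) => //; rewrite pickleK.
  - by move=> [n _]; case: unpickle => // i Si; exists i.
by apply: bigcupT_measurable => n; case: unpickle.
Qed.

Lemma meas_forall (I : countType) (S : I -> set T) :
  (forall i, measurable (S i)) -> measurable [set t | forall i, S i t].
Proof.
move=> mS.
have -> : [set t | forall i, S i t] =
    \bigcap_n (match @unpickle I n with Some i => S i | None => setT end).
  apply/seteqP; split => t /=.
  - by move=> H n _; case: unpickle.
  - by move=> H i; have := H (pickle i) Logic.I; rewrite pickleK.
by apply: bigcapT_measurable => n; case: unpickle.
Qed.

Lemma meas_const (P : Prop) : measurable [set _ : T | P].
Proof.
case: (pselect P) => p.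
  by rewrite (_ : [set _ | P] = setT) //; apply/seteqP; split.
by rewrite (_ : [set _ | P] = set0) //; apply/seteqP; split.
Qed.

Lemma comp_count_meas (C : countType) (Z : T -> C) (G : C -> R) :
  (forall z, measurable (Z @^-1` [set z])) -> measurable_fun setT (G \o Z).
Proof.
move=> mZ _ B mB; rewrite setTI.
have -> : (G \o Z) @^-1` B = [set t | exists z, (Z @^-1` [set z]) t /\ [set _ : T | B (G z)] t].
  apply/seteqP; split => t /=.
  - by move=> Bt; exists (Z t).
  - by move=> [z [-> ]].
apply: meas_exists => z; apply: measurableI => //; exact: meas_const.
Qed.
End G.

Lemma floor_fiber_interval (R : realType) (c : R) (w : int) : 0 < c ->
  is_interval [set x : R | Num.floor (c * x) = w].
Proof.
move=> c0 x y /= hx hy z /andP[xz zy]; apply/le_anti/andP; split.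
  by rewrite -hy le_floor // ler_pM2l.
by rewrite -hx le_floor // ler_pM2l.
Qed.
Section S.
Context (R : realType) (d0 d1 m : nat) (X : 'I_m -> 'rV[R]_d0).

Lemma coordf_cont (x : 'rV[R]_d0) (j : 'I_d1) :
  continuous (fun f : fspace R d0 d1 => f x ord0 j).
Proof.
move=> f.
apply: (@continuous_comp _ _ _ (fun f : fspace R d0 d1 => f x) (fun M : 'rV[R]_d1 => M ord0 j)).
  exact: (@proj_continuous _ (fun _ : 'rV[R]_d0 => 'rV[R]_d1) x).
exact: coord_continuous.
Qed.

Lemma evalX_cont : continuous (@evalX R d0 d1 m X).
Proof.
move=> f A /nbhs_ballP [e e0 sub].
have H : forall ij : 'I_m * 'I_d1, \forall g \near (f : fspace R d0 d1),
   ball (f (X ij.1) ord0 ij.2) e ((g : fspace R d0 d1) (X ij.1) ord0 ij.2).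
  move=> [i j] /=.
  apply: (coordf_cont (X i) j f); exact: nbhsx_ballx.
apply: filterS (@filter_forall _ _ _ _ (nbhs_filter f) H) => g Hg.
apply: sub; split => // i j; rewrite !mxE; exact: (Hg (i, j)).
Qed.

Lemma coord_meas (x : 'rV[R]_d0) (j : 'I_d1) (B : set R) : measurable B ->
  measurable ((fun f : fmeas R d0 d1 => f x ord0 j) @^-1` B).
Proof. by move=> mB; apply: sub_sigma_algebra; exists x, j, B. Qed.

Definition Zk (k : nat) (f : fmeas R d0 d1) : 'M[int]_(m, d1) :=
  \matrix_(i, j) Num.floor (k.+1%:R * f (X i) ord0 j).

Lemma Zk_fiber k z : measurable (Zk k @^-1` [set z]).
Proof.
have -> : Zk k @^-1` [set z] = [set f | forall ij : 'I_m * 'I_d1,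
    ((fun f : fmeas R d0 d1 => f (X ij.1) ord0 ij.2) @^-1`
      [set x : R | Num.floor (k.+1%:R * x) = z ij.1 ij.2]) f].
  apply/seteqP; split => f /=.
  - by move=> <- [i j]; rewrite /Zk mxE.
  - by move=> H; apply/matrixP => i j; rewrite /Zk mxE; exact: (H (i, j)).
apply: meas_forall => -[i j]; apply: coord_meas.
by apply: is_interval_measurable; apply: floor_fiber_interval.
Qed.

Definition Gk (l : 'M[R]_(m, d1) -> R) (k : nat) (z : 'M[int]_(m, d1)) : R :=
  l (\matrix_(i, j) ((z i j)%:~R / k.+1%:R)).

Lemma Lk_meas l k : measurable_fun setT (Gk l k \o Zk k).
Proof. apply: comp_count_meas; exact: Zk_fiber. Qed.

Lemma Lk_cvg (l : 'M[R]_(m, d1) -> R) (f : fmeas R d0 d1) : continuous l ->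
  (fun k => (Gk l k \o Zk k) f) @ \oo --> l (evalX X f).
Proof.
move=> lc.
apply: (cvg_comp _ _ _ (lc (evalX X f))).
move=> A /nbhs_ballP [e /= e0 sub].
have := near_infty_natSinv_lt (PosNum e0).
apply: filterS => k /= hk.
apply: sub; split => // i j; rewrite !mxE.
rewrite /ball /=.
set c : R := k.+1%:R; set t := c * _.
have c0 : 0 < c by rewrite /c ltr0n.
have h1 := floor_le t; have h2 := floorD1_gt t; rewrite intrD in h2.
rewrite (_ : _ - _ = (t - (Num.floor t)%:~R) * c^-1); last first.
  by rewrite /t mulrBl mulrAC divff ?mul1r // gt_eqF.
rewrite normrM (@ger0_norm _ c^-1); last by rewrite invr_ge0 ltW.
apply: le_lt_trans hk; apply: ler_piMl; first by rewrite invr_ge0 ltW.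
rewrite ger0_norm ?subr_ge0 //; rewrite lerBlDl; exact: ltW.
Qed.
Lemma L_meas (l : 'M[R]_(m, d1) -> R) : continuous l ->
  measurable_fun setT (fun f : fmeas R d0 d1 => l (evalX X f)).
Proof.
move=> lc; apply: (@measurable_fun_cvg _ _ _ _ (fun k => Gk l k \o Zk k)).
  by move=> k; exact: Lk_meas.
by move=> f _; exact: Lk_cvg.
Qed.
End S.
Section P.
Context d (T : measurableType d) (R : realType).

Lemma bnd_of (h : T -> R) M : (forall x, `|h x| <= M) -> [bounded h x | x in setT].
Proof.
move=> hM; exists M; split; first exact: num_real.
by move=> y My x _; apply: le_trans (hM x) (ltW My).
Qed.

Lemma post_integral (P Q : probability T R) (rho : T -> R) :
  measurable_fun setT rho -> (exists B, forall x, `|rho x| <= B) ->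
  (forall A, measurable A -> Q A = (\int[P]_(x in A) (rho x)%:E)%E) ->
  forall h : T -> R, measurable_fun setT h -> (exists M, forall x, `|h x| <= M) ->
  (\int[Q]_x (h x)%:E = \int[P]_x (h x * rho x)%:E)%E.
Proof.
move=> mrho [B hB] hQ h mh [M hM].
have fin (mu : probability T R) : (mu setT < +oo)%E by rewrite probability_setT ltry.
have rhoint : P.-integrable setT (EFin \o rho).
  by apply: measurable_bounded_integrable => //; [exact: fin | exact: bnd_of hB].
have QP : (charge_of_finite_measure Q) `<< P.
  move=> N nullN A mA AN /=; rewrite hQ //.
  apply: null_set_integral => //; last exact: nullN.
  apply/measurable_EFinP; exact: measurable_funTS.
have ae : ae_eq P setT (EFin \o rho) (Radon_Nikodym (charge_of_finite_measure Q) P).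
  apply: integral_ae_eq => //.
  move=> E _ mE; rewrite -Radon_Nikodym_integral //= hQ //.
have hint : Q.-integrable setT (EFin \o h).
  by apply: measurable_bounded_integrable => //; [exact: fin | exact: bnd_of hM].
rewrite -(Radon_Nikodym_change_of_variables QP measurableT hint).
under [RHS]eq_integral do rewrite EFinM.
apply: ae_eq_integral => //.
- apply: emeasurable_funM; first exact/measurable_EFinP.
  by apply: measurable_int; exact: Radon_Nikodym_integrable.
- apply: emeasurable_funM; exact/measurable_EFinP.
- apply: ae_eqe_mul2l; exact: ae_eq_sym.
Qed.
End P.

Lemma prob_fin d (T : measurableType d) (R : realType) (mu : probability T R) :
  (mu setT < +oo)%E.
Proof. by move: (probability_setT mu) => /= ->; rewrite ltry. Qed.

Lemma fin_int d (T : measurableType d) (R : realType) (mu : probability T R)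
  (g : T -> R) M : measurable_fun setT g -> (forall x, `|g x| <= M) ->
  (\int[mu]_x (g x)%:E)%E = (fine (\int[mu]_x (g x)%:E))%:E.
Proof.
move=> mg gM; rewrite fineK //; apply: (@integrable_fin_num _ _ _ _ setT measurableT (EFin \o g)).
apply: measurable_bounded_integrable => //; last exact: bnd_of gM.
by move: (probability_setT mu) => /= ->; rewrite ltry.
Qed.

Lemma post_int_eq (R : realType) (d0 d1 m : nat) (X : 'I_m -> 'rV[R]_d0)
  (l : 'M[R]_(m, d1) -> R) Ml (mu nu : probability (fmeas R d0 d1) R)
  (h : fmeas R d0 d1 -> R) Mh :
  measurable_fun setT (fun f : fmeas R d0 d1 => l (evalX X f)) ->
  (forall f : fmeas R d0 d1, `|l (evalX X f)| <= Ml) ->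
  measurable_fun setT h -> (forall f, `|h f| <= Mh) ->
  is_posterior X l mu nu ->
  (\int[nu]_f (h f)%:E = (\int[mu]_f (h f * l (evalX X f))%:E) *
     ((fine (\int[mu]_g (l (evalX X g))%:E))^-1)%:E)%E.
Proof.
move=> mL bL mh bh post.
set c := fine _.
rewrite (@post_integral _ _ _ mu nu (fun f => l (evalX X f) / c)) //; last first.
- by exists Mh.
- by exists (Ml * `|c^-1|) => f; rewrite normrM ler_wpM2r.
- by apply: measurable_funM => //; exact: measurable_cst.
rewrite -integralZr //; last first.
  apply: measurable_bounded_integrable => //.
  - exact: prob_fin.
  - exact: measurable_funM.
  - by apply: (@bnd_of _ _ _ _ (Mh * Ml)) => f; rewrite normrM ler_pM.
by apply: eq_integral => f _; rewrite -EFinM mulrA.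
Qed.

Arguments post_int_eq {R d0 d1 m X l Ml mu nu h Mh}.
Arguments fin_int {d T R} mu {g M}.

Theorem proposition1 (R : realType) (d0 d1 m : nat)
  (Pn : nat -> probability (fmeas R d0 d1) R) (P : probability (fmeas R d0 d1) R)
  (X : 'I_m -> 'rV[R]_d0) (l : 'M[R]_(m, d1) -> R)
  (Qn : nat -> probability (fmeas R d0 d1) R) (Q : probability (fmeas R d0 d1) R) :
  weak_conv Pn P ->
  (forall v, 0 <= l v) ->
  continuous l ->
  (exists M : R, forall v, l v <= M) ->
  (0 < \int[P]_g (l (evalX X g))%:E)%E ->
  (forall n, is_posterior X l (Pn n) (Qn n)) ->
  is_posterior X l P Q ->
  weak_conv Qn Q.
Proof.
move=> wc l0 lc [Ml hMl] Zpos postn post h hc [Mh hMh] hm.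
pose L := fun f : fmeas R d0 d1 => l (evalX X f).
have mL : measurable_fun setT L by exact: L_meas.
have cL : continuous (L : fspace R d0 d1 -> R).
  by move=> f; apply: continuous_comp; [exact: evalX_cont | exact: lc].
have bL : forall f, `|L f| <= Ml by move=> f; rewrite ger0_norm ?hMl ?l0.
have mhL : measurable_fun setT (fun f : fmeas R d0 d1 => h f * L f) by exact: measurable_funM.
have bhL : forall f, `|h f * L f| <= Mh * Ml by move=> f; rewrite normrM ler_pM.
have chL : continuous (fun f : fspace R d0 d1 => h f * L f).
  by move=> f; apply: continuousM; [exact: hc | exact: cL].
have cvZ := wc L cL (ex_intro _ Ml bL) mL.
have cvA := wc _ chL (ex_intro _ (Mh * Ml) bhL) mhL.
rewrite (post_int_eq mL bL hm hMh post).
rewrite (fin_int _ mhL bhL) (fin_int _ mL bL) -EFinM.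
have -> : (fun n => \int[Qn n]_f (h f)%:E)%E = (fun n =>
    ((fine (\int[Pn n]_f (h f * L f)%:E)%E) * (fine (\int[Pn n]_f (L f)%:E)%E)^-1)%:E).
  apply/funext => n; rewrite (post_int_eq mL bL hm hMh (postn n)).
  by rewrite (fin_int _ mhL bhL) (fin_int _ mL bL) -EFinM.
rewrite (fin_int _ mhL bhL) in cvA; rewrite (fin_int _ mL bL) in cvZ.
apply: cvg_EFin; first by apply: nearW.
apply: cvgM; first exact: (fine_cvg cvA).
apply: cvgV; last exact: (fine_cvg cvZ).
rewrite gt_eqF // -lte_fin -(fin_int _ mL bL) //.
Qed.
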